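(* Let $A_0$ and $A_1$ be NFAs over an alphabet $\Sigma$ of cardinality $m$, each of depth at most $n$. Assume that there is no infinite tower between the languages $L(A_0)$ and $L(A_1)$. Let $(w_i)_{i=1}^r$ be a tower between $L(A_0)$ and $L(A_1)$ such that $w_i\in L(A_{i \bmod 2})$ for every $i$. Then $r \le \frac{n^{m+1}-1}{n-1}$.
   Context: All automata are assumed to have no useless states (every state lies on an accepting path). A path in an NFA is simple if its states are pairwise distinct; the depth of an NFA is the number of states on its longest simple path. For strings $v=a_1\cdots a_k$ and $w$, $v\preccurlyeq w$ ($v$ is a subsequence of $w$) if $w\in\Sigma^*a_1\Sigma^*a_2\Sigma^*\cdots\Sigma^*a_k\Sigma^*$. A sequence $(w_i)_{i=1}^r$ of strings is a tower between languages $K$ and $L$ if $w_1\in K\cup L$ and for all $i=1,\dots,r-1$: $w_i\preccurlyeq w_{i+1}$, $w_i\in K$ implies $w_{i+1}\in L$, and $w_i\in L$ implies $w_{i+1}\in K$; $r$ is its height. An infinite tower is an infinite sequence with the same properties. *)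

(* Defs.v *)
From mathcomp Require Import all_boot.
Set Implicit Arguments. Unset Strict Implicit. Unset Printing Implicit Defensive.

Record nfa (Sigma : finType) := NFA {
  state : finType;
  init  : {set state};
  final : {set state};
  trans : state -> Sigma -> state -> bool }.

Section NFA.
Variables (Sigma : finType) (A : nfa Sigma).

Fixpoint accept_from (q : state A) (w : seq Sigma) : bool :=
  match w with
  | [::] => q \in @final _ A
  | a :: w' => [exists q', @trans _ A q a q' && accept_from q' w']
  end.

Fixpoint reach (q : state A) (w : seq Sigma) (q' : state A) : bool :=
  match w with
  | [::] => q == q'
  | a :: w' => [exists q'', @trans _ A q a q'' && reach q'' w' q']
  end.

Definition lang (w : seq Sigma) : bool :=
  [exists q in @init _ A, accept_from q w].

Definition no_useless_states : Prop :=
  forall q : state A,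
    (exists u : seq Sigma, exists2 q0, q0 \in @init _ A & reach q0 u q) /\
    (exists v : seq Sigma, accept_from q v).

Definition edge : rel (state A) := fun p q => [exists a, @trans _ A p a q].

Definition depth_le (n : nat) : Prop :=
  forall (x : state A) (s : seq (state A)),
    path edge x s -> uniq (x :: s) -> size (x :: s) <= n.
End NFA.

Section Towers.
Variable (Sigma : finType).

Definition tower (K L : pred (seq Sigma)) (ws : seq (seq Sigma)) : Prop :=
  (forall w1, ohead ws = Some w1 -> K w1 || L w1) /\
  (forall i, i.+1 < size ws ->
     let wi := nth [::] ws i in let wi1 := nth [::] ws i.+1 in
     [/\ subseq wi wi1, K wi -> L wi1 & L wi -> K wi1]).

Definition infinite_tower (K L : pred (seq Sigma)) (f : nat -> seq Sigma) : Prop :=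
  (K (f 0) || L (f 0)) /\
  (forall i, [/\ subseq (f i) (f i.+1), K (f i) -> L (f i.+1)
              & L (f i) -> K (f i.+1)]).
End Towers.

(* Main.v *)
Require Import Defs.
From mathcomp Require Import all_boot.
From mathcomp Require Import zify.
From Stdlib Require Import ClassicalEpsilon.
Set Implicit Arguments. Unset Strict Implicit. Unset Printing Implicit Defensive.


Section Frames.
Variable Sigma : finType.

Inductive item := Star of {set Sigma} | Atom of Sigma.

Fixpoint matches (F : seq item) (w : seq Sigma) : Prop :=
  match F with
  | [::] => w = [::]
  | Star G :: F' => exists u v, [/\ w = u ++ v, all (fun a => a \in G) u & matches F' v]
  | Atom b :: F' => exists v, w = b :: v /\ matches F' v
  end.

Definition inI F w := exists z, matches F z /\ subseq w z.

Lemma matches_any F : exists z, matches F z.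
Proof.
elim: F => [|[G|b] F [z Hz]] /=; first by exists [::].
  by exists z, [::], z.
by exists (b :: z), z.
Qed.

Lemma inI_eps F : inI F [::].
Proof. by have [z Hz] := matches_any F; exists z; split=> //; apply: sub0seq. Qed.

Lemma inI_down F w w' : inI F w -> subseq w' w -> inI F w'.
Proof. by move=> [z [Hz Hs]] H; exists z; split=> //; apply: subseq_trans H Hs. Qed.

Lemma inI_nilE w : inI [::] w -> w = [::].
Proof. by move=> [z [/= -> Hs]]; move: Hs; rewrite subseq0 => /eqP. Qed.

Lemma subseq_catE (w z1 z2 : seq Sigma) : subseq w (z1 ++ z2) ->
  exists w1 w2, [/\ w = w1 ++ w2, subseq w1 z1 & subseq w2 z2].
Proof.
elim: z1 w => [|c z1 IH] w /=.
  by move=> H; exists [::], w; split=> //; apply: sub0seq.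
case: w => [|d w'] /=.
  by move=> _; exists [::], [::]; split=> //; apply: sub0seq.
case: ifP => [/eqP -> | _] H.
  have [w1 [w2 [-> H1 H2]]] := IH _ H.
  by exists (c :: w1), w2; split=> //=; rewrite eqxx.
have [w1 [w2 [E H1 H2]]] := IH _ H.
exists w1, w2; split=> //; apply: subseq_trans H1 (subseq_cons _ _).
Qed.

Lemma inI_starE (G : {set Sigma}) F w : inI (Star G :: F) w ->
  exists u v, [/\ w = u ++ v, all (fun a => a \in G) u & inI F v].
Proof.
move=> [z [[u [v [-> Hu Hv]]] Hs]].
have [w1 [w2 [-> H1 H2]]] := subseq_catE Hs.
exists w1, w2; split=> //.
  by apply/allP => a /(mem_subseq H1) Ha; move/allP: Hu; apply.
by exists v.
Qed.

Lemma star_inI (G : {set Sigma}) F (u v : seq Sigma) : all (fun a => a \in G) u -> inI F v -> inI (Star G :: F) (u ++ v).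
Proof.
move=> Hu [z [Hz Hs]]; exists (u ++ z); split; first by exists u, z.
by apply: cat_subseq (subseq_refl _) Hs.
Qed.

Lemma inI_atomE b F w : inI (Atom b :: F) w ->
  (exists v, w = b :: v /\ inI F v) \/ inI F w.
Proof.
move=> [z [[v [-> Hv]] Hs]].
case: w Hs => [|c w] Hs; first by right; apply: inI_eps.
move: Hs => /=; case: ifP => [/eqP -> | _] H.
  by left; exists w; split=> //; exists v.
by right; exists v.
Qed.

Lemma atom_inI1 b F v : inI F v -> inI (Atom b :: F) (b :: v).
Proof. by move=> [z [Hz Hs]]; exists (b :: z); split; [exists z | rewrite /= eqxx]. Qed.

Lemma atom_inI2 b F w : inI F w -> inI (Atom b :: F) w.
Proof.
move=> [z [Hz Hs]]; exists (b :: z); split; first by exists z.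
by apply: subseq_trans Hs (subseq_cons _ _).
Qed.

Lemma matches_cat B G (x y : seq Sigma) : matches B x -> matches G y -> matches (B ++ G) (x ++ y).
Proof.
elim: B x => [|[H|b] B IH] x /=; first by move=> -> .
  by move=> [u [v [-> Hu Hv]]] Hy; exists u, (v ++ y); rewrite catA; split=> //; apply: IH.
by move=> [v [-> Hv]] Hy; exists (v ++ y); split=> //; apply: IH.
Qed.

Lemma inI_cat B G (x y : seq Sigma) : inI B x -> inI G y -> inI (B ++ G) (x ++ y).
Proof.
move=> [z1 [H1 S1]] [z2 [H2 S2]]; exists (z1 ++ z2); split.
  exact: matches_cat. exact: cat_subseq.
Qed.

Lemma inI_top w : inI [:: Star setT] w.
Proof.
by exists w; split; [exists w, [::]; rewrite cats0; split=> //; apply/allP=> a; rewrite inE | apply: subseq_refl].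
Qed.

Variable n : nat.
Fixpoint T c := if c is c'.+1 then n * (T c' + 1) else 0.
Definition phi it := match it with Star G => T #|G| | Atom _ => 1 end.
Definition pot F := sumn (map phi F).

Lemma T_mono a b : a <= b -> T a <= T b.
Proof.
move=> H; elim: b a H => [|b IH] [|a] //= H.
  by apply: leq_mul => //; rewrite leq_add2r; apply: IH.
Qed.

Lemma T_sum c : 1 + T c = \sum_(k < c.+1) n ^ k.
Proof.
elim: c => [|c IH]; first by rewrite big_ord_recl big_ord0.
rewrite big_ord_recl /= expn0; congr (_ + _).
rewrite addnC IH big_distrr /=.
by apply: eq_bigr => i _; rewrite expnS.
Qed.

Lemma pot_cat B G : pot (B ++ G) = pot B + pot G.
Proof. by rewrite /pot map_cat sumn_cat. Qed.

End Frames.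

Section Auto.
Variable Sigma : finType.
Variable A : nfa Sigma.
Implicit Types (q : state A) (x y : seq Sigma).

Lemma reach_cat q x y q' q'' : reach q x q' -> reach q' y q'' -> reach q (x ++ y) q''.
Proof.
elim: x q => [|a x IH] q /=; first by move=> /eqP ->.
by move=> /existsP [r /andP [Ht Hr]] H; apply/existsP; exists r; rewrite Ht (IH _ Hr H).
Qed.

Lemma accept_cat q x q' y : reach q x q' -> accept_from q' y -> accept_from q (x ++ y).
Proof.
elim: x q => [|a x IH] q /=; first by move=> /eqP ->.
by move=> /existsP [r /andP [Ht Hr]] H; apply/existsP; exists r; rewrite Ht (IH _ Hr H).
Qed.

Lemma accept_catE q x y : accept_from q (x ++ y) -> exists q', reach q x q' /\ accept_from q' y.
Proof.
elim: x q => [|a x IH] q /=; first by move=> H; exists q.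
move=> /existsP [r /andP [Ht Hr]]; have [q' [H1 H2]] := IH _ Hr.
by exists q'; split=> //; apply/existsP; exists r; rewrite Ht.
Qed.

Variable Gam : {set Sigma}.
Definition eG : rel (state A) := fun u v => [exists a, (a \in Gam) && trans u a v].

Lemma reach_connect q x q' : all (fun a => a \in Gam) x -> reach q x q' -> connect eG q q'.
Proof.
elim: x q => [|a x IH] q /=; first by move=> _ /eqP ->.
move=> /andP [Ha Hx] /existsP [r /andP [Ht Hr]].
apply: connect_trans (IH _ Hx Hr); apply: connect1; apply/existsP; exists a; by rewrite Ha.
Qed.

Lemma connect_word q q' : connect eG q q' -> exists x, all (fun a => a \in Gam) x /\ reach q x q'.
Proof.
move=> /connectP [p Hp ->]; elim: p q Hp => [|r p IH] q /=; first by exists [::]; split=> //=.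
move=> /andP [/existsP [a /andP [Ha Ht]] Hp]; have [x [Hx Hr]] := IH _ Hp.
exists (a :: x); rewrite /= Ha Hx; split=> //; apply/existsP; exists r; by rewrite Ht.
Qed.

Definition Lam (p : state A) : {set Sigma} :=
  [set a in Gam | [exists p1, [exists p2, [&& connect eG p p1, trans p1 a p2 & connect eG p2 p]]]].

Lemma Lam_sub p : Lam p \subset Gam.
Proof. by apply/subsetP => a; rewrite inE => /andP []. Qed.

Lemma loop_lemma p y : all (fun a => a \in Lam p) y ->
  exists l, [/\ all (fun a => a \in Gam) l, reach p l p & subseq y l].
Proof.
elim: y => [|a y IH] /=; first by exists [::]; rewrite /= eqxx.
move=> /andP [Ha Hy]; have [l [Hl Hr Hs]] := IH Hy.
move: Ha; rewrite inE => /andP [HaG /existsP [p1 /existsP [p2 /and3P [C1 Ht C2]]]].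
have [x1 [Hx1 R1]] := connect_word C1; have [x2 [Hx2 R2]] := connect_word C2.
exists (x1 ++ a :: x2 ++ l); split.
- by rewrite all_cat /= HaG all_cat Hx1 Hx2 Hl.
- apply: reach_cat R1 _; rewrite /=; apply/existsP; exists p2; rewrite Ht /=.
  exact: reach_cat R2 Hr.
- apply: subseq_trans (suffix_subseq x1 _); rewrite /= eqxx.
  exact: subseq_trans Hs (suffix_subseq x2 _).
Qed.

End Auto.

Lemma path_to_last (T : finType) (e : rel T) x s z : path e x s -> z \in x :: s -> connect e z (last x s).
Proof.
elim: s x => [|y s IH] x /=; first by rewrite inE => _ /eqP ->.
move=> Hp0; have /andP [Hxy Hp] := Hp0; rewrite inE => /orP [/eqP -> |Hz].
  exact: (@path_connect _ e x (y :: s) Hp0 _ (mem_last x (y :: s))).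
exact: IH.
Qed.

Section Seg.
Variable Sigma : finType.
Variable A : nfa Sigma.
Variable Gam : {set Sigma}.
Variable n : nat.
Local Notation eG := (@eG _ A Gam).
Local Notation Lam := (@Lam _ A Gam).

Lemma seg (x : seq Sigma) : forall (s p s1 : state A), all (fun a => a \in Gam) x -> reach s x s1 ->
  connect eG p s -> connect eG s p ->
  (forall p', connect eG s p' -> connect eG p' s1 -> #|Lam p'| < #|Gam|) ->
  exists B k, [/\ inI (Star (Lam p) :: B) x, pot n B <= k.-1 * (T n #|Gam|.-1 + 1), 0 < k &
     exists sg, [/\ path eG p sg, uniq (p :: sg) & k <= size (p :: sg)]].
Proof.
elim: x => [|a x IH] s p s1 /=.
  move=> _ _ _ _ _; exists [::], 1; split=> //; first exact: inI_eps.
  by exists [::].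
move=> /andP [Ha Hx] /existsP [s' /andP [Ht Hr]] Cps Csp Hdef.
have Hss' : eG s s' by apply/existsP; exists a; rewrite Ha.
have Hdef' : forall p', connect eG s' p' -> connect eG p' s1 -> #|Lam p'| < #|Gam|.
  by move=> p' C1 C2; apply: Hdef => //; apply: connect_trans (connect1 Hss') C1.
have Cs's1 : connect eG s' s1 by apply: reach_connect Hx Hr.
case: (boolP (connect eG s' p)) => Cs'p.
  have [B [k [HI Hpot Hk Hsg]]] := IH s' p s1 Hx Hr (connect_trans Cps (connect1 Hss')) Cs'p Hdef'.
  exists B, k; split=> //.
  have [u [v [-> Hu Hv]]] := inI_starE HI.
  have HaL : a \in Lam p.
    rewrite inE Ha; apply/existsP; exists s; apply/existsP; exists s'; by rewrite Cps Ht Cs'p.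
  by rewrite -cat_cons; apply: star_inI => //=; rewrite HaL Hu.
have [B [k [HI Hpot Hk [sg [Hp Hu Hsz]]]]] := IH s' s' s1 Hx Hr (connect0 _ _) (connect0 _ _) Hdef'.
exists (Atom a :: Star (Lam s') :: B), k.+1; split=> //.
- by rewrite -[a :: x]cat0s; apply: star_inI => //; apply: atom_inI1.
- have HL : #|Lam s'| < #|Gam| by apply: Hdef => //; apply: connect1.
  have HT : T n #|Lam s'| <= T n #|Gam|.-1 by apply: T_mono; lia.
  rewrite /pot /= -/(pot n B).
  move: Hpot HT; rewrite -(prednK Hk) /=.
  set X := T n _. set Y := T n _. set Z := pot n B. set j := k.-1. nia.
- move: Cps => /connectP [rho Hrho Es].
  case: (shortenP Hrho) Es => rho' Hp' Hu' Hsub Es.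
  exists (rho' ++ s' :: sg); split.
  + by rewrite cat_path Hp' /= -Es Hss' Hp.
  + change (uniq ((p :: rho') ++ s' :: sg)); rewrite cat_uniq Hu' Hu andbT.
        apply/hasPn => z Hz; apply/negP => Hz'.
    have C1 : connect eG z s by rewrite Es; apply: path_to_last Hp' Hz'.
    have C2 : connect eG s' z by apply: (@path_connect _ eG s' sg Hp z Hz).
    by move/negP: Cs'p; apply; apply: connect_trans C2 (connect_trans C1 Csp).
  + by rewrite /= size_cat /=; move: Hsz => /=; lia.
Qed.
End Seg.

Section K.
Variable Sigma : finType.
Variable A : nfa Sigma.
Variable n : nat.
Hypothesis Hdepth : depth_le A n.

Definition full_from (s : state A) F := forall x : seq Sigma, inI F x ->
  exists y, [/\ inI F y, accept_from s y & subseq x y].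

Lemma K F : forall (s : state A) v, accept_from s v -> inI F v ->
  exists G, [/\ inI G v, pot n G <= pot n F & (pot n G = pot n F -> full_from s F)].
Proof.
elim: F => [|[Gam|b] F IH] s v Hacc HI.
- have Ev := inI_nilE HI; subst v.
  exists [::]; split=> // _ x Hx; rewrite (inI_nilE Hx).
  by exists [::]; split=> //; apply: inI_eps.
- have [u [v'' [Ev Hu Hv]]] := inI_starE HI; subst v.
  have [s1 [Hr Hacc1]] := accept_catE Hacc.
  have [G' [HI' Hpot' Heq']] := IH s1 v'' Hacc1 Hv.
  case: (boolP [exists p', [&& connect (@eG _ A Gam) s p', connect (@eG _ A Gam) p' s1 & Gam \subset @Lam _ A Gam p']]).
  + move=> /existsP [p' /and3P [C1 C2 Hsub]].
    exists (Star Gam :: G'); split.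
    * exact: star_inI.
    * by rewrite /pot /= -!/(pot n _) leq_add2l.
    * rewrite /pot /= -!/(pot n _) => /addnI Heq x Hx.
      have [y0 [y1 [-> Hy0 Hy1]]] := inI_starE Hx.
      have [y1' [Hi1 Ha1 Hs1]] := Heq' Heq y1 Hy1.
      have Hy0L : all (fun a => a \in @Lam _ A Gam p') y0.
        by apply/allP => a Ha; apply: (subsetP Hsub); move/allP: Hy0; apply.
      have [l [Hl Hrl Hsl]] := loop_lemma Hy0L.
      have [x1 [Hx1 R1]] := connect_word C1.
      have [x2 [Hx2 R2]] := connect_word C2.
      exists ((x1 ++ l ++ x2) ++ y1'); split.
      -- by apply: star_inI => //; rewrite !all_cat Hx1 Hl Hx2.
      -- apply: accept_cat Ha1; apply: reach_cat R1 _; exact: reach_cat Hrl R2.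
      -- apply: cat_subseq Hs1; apply: subseq_trans (suffix_subseq x1 _).
         exact: subseq_trans Hsl (prefix_subseq _ _).
  + move=> Hnf.
    have Hdef : forall p', connect (@eG _ A Gam) s p' -> connect (@eG _ A Gam) p' s1 -> #|@Lam _ A Gam p'| < #|Gam|.
      move=> p' C1 C2; rewrite ltnNge; apply/negP => Hle; move/negP: Hnf; apply.
      apply/existsP; exists p'; rewrite C1 C2 /=.
      have /eqP -> : @Lam _ A Gam p' == Gam by rewrite eqEcard Lam_sub Hle.
      exact: subxx.
    have [B [k [HB HpotB Hk [sg [Hp Hu' Hsz]]]]] :=
      seg n Hu Hr (connect0 _ _) (connect0 _ _) Hdef.
    have Hkn : k <= n.
      apply: leq_trans Hsz _; apply: Hdepth => //.
      by apply: sub_path Hp => a b /existsP [c /andP [_ H]]; apply/existsP; exists c.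
    have HL := Hdef s (connect0 _ _) (reach_connect Hu Hr).
    have HT : T n #|@Lam _ A Gam s| <= T n #|Gam|.-1 by apply: T_mono; lia.
    have Hlt : pot n ((Star (@Lam _ A Gam s) :: B) ++ G') < pot n (Star Gam :: F).
      rewrite pot_cat /pot /= -!/(pot n _).
      move: HL HT HpotB Hpot'; case E: #|Gam| => [|c] //= _.
      set X := T n c; set Y := T n _; set Z := pot n B; set W := pot n G'; set V := pot n F.
      move=> HT HpotB Hpot'.
      have : Z <= k.-1 * (X + 1) by [].
      rewrite -(prednK Hk); set j := k.-1.
      move: Hkn; rewrite -(prednK Hk) -/j => Hkn Hz.
      nia.
    exists ((Star (@Lam _ A Gam s) :: B) ++ G'); split.
    * exact: inI_cat HB HI'.
    * exact: ltnW.
    * by move=> E; move: Hlt; rewrite E ltnn.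
- case: (inI_atomE HI) => [[v'' [Ev Hv]] | Hv].
  + subst v; move: Hacc => /= /existsP [s' /andP [Ht Hacc']].
    have [G' [HI' Hpot' Heq']] := IH s' v'' Hacc' Hv.
    exists (Atom b :: G'); split.
    * exact: atom_inI1.
    * by rewrite /pot /= -!/(pot n _) ltnS.
    * rewrite /pot /= -!/(pot n _) => /addnI Heq x Hx.
      have Hgen : forall x1, inI F x1 -> subseq x (b :: x1) ->
          exists y, [/\ inI (Atom b :: F) y, accept_from s y & subseq x y].
        move=> x1 Hx1 Hsx; have [y1 [Hi1 Ha1 Hs1]] := Heq' Heq x1 Hx1.
        exists (b :: y1); split.
        -- exact: atom_inI1.
        -- by apply/existsP; exists s'; rewrite Ht.
        -- by apply: subseq_trans Hsx _; rewrite /= eqxx.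
      case: (inI_atomE Hx) => [[x1 [Ex Hx1]] | Hx1].
        by apply: (Hgen x1 Hx1); rewrite Ex /= eqxx subseq_refl.
      by apply: (Hgen x Hx1); apply: subseq_cons.
  + have [G' [HI' Hpot' Heq']] := IH s v Hacc Hv.
    exists G'; split=> //.
      by rewrite /pot /= -!/(pot n _); lia.
    by rewrite /pot /= -!/(pot n _) => E; move: Hpot'; rewrite E; lia.
Qed.
End K.

Section Main.
Variable Sigma : finType.
Variable n : nat.

Definition fullL (A : nfa Sigma) F := forall x : seq Sigma, inI F x ->
  exists y, [/\ inI F y, lang A y & subseq x y].

Lemma K_lang (A : nfa Sigma) F v : depth_le A n -> lang A v -> inI F v ->
  exists G, [/\ inI G v, pot n G <= pot n F & (pot n G = pot n F -> fullL A F)].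
Proof.
move=> Hd /existsP [q /andP [Hq Hacc]] HI.
have [G [HG Hp He]] := K Hd Hacc HI.
exists G; split=> // E x Hx; have [y [H1 H2 H3]] := He E x Hx.
by exists y; split=> //; apply/existsP; exists q; rewrite Hq.
Qed.

Variables A0 A1 : nfa Sigma.
Definition Ab (p : bool) := if p then A1 else A0.

Lemma inf_tower F : fullL A0 F -> fullL A1 F ->
  exists f, infinite_tower (lang A0) (lang A1) f.
Proof.
move=> H0 H1.
case: (classic (exists w, lang A0 w && lang A1 w)) => [[w /andP [Hw0 Hw1]] | Hdis].
  exists (fun _ => w); split; first by rewrite Hw0.
  by move=> i; split=> //; apply: subseq_refl.
have Hfull : forall p, fullL (Ab p) F by case.
pose step (p : bool) (x : seq Sigma) := epsilon (inhabits [::])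
   (fun y => [/\ inI F y, lang (Ab p) y & subseq x y]).
have Hstep : forall p x, inI F x -> [/\ inI F (step p x), lang (Ab p) (step p x) & subseq x (step p x)].
  by move=> p x Hx; apply: (epsilon_spec (inhabits [::]) _ (Hfull p x Hx)).
pose fix f i := if i is i'.+1 then step (odd i) (f i') else step false [::].
have Hf : forall i, inI F (f i) /\ lang (Ab (odd i)) (f i).
  elim=> [|i [IHa IHb]].
    by have [] := Hstep false [::] (inI_eps F).
  by have [] := Hstep (odd i.+1) (f i) IHa.
have Hs : forall i, subseq (f i) (f i.+1).
  by move=> i; have [] := Hstep (odd i.+1) (f i) (proj1 (Hf i)).
exists f; split.
  by have [_ /= ->] := Hf 0.
move=> i; split; first exact: Hs.
- move=> H; have [_ Hb] := Hf i; have [_ Hb'] := Hf i.+1.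
  move: Hb Hb'; rewrite /Ab /=; case: (odd i) => //= Hb _.
  by exfalso; apply: Hdis; exists (f i); rewrite H Hb.
- move=> H; have [_ Hb] := Hf i; have [_ Hb'] := Hf i.+1.
  move: Hb Hb'; rewrite /Ab /=; case: (odd i) => //= Hb _.
  by exfalso; apply: Hdis; exists (f i); rewrite H Hb.
Qed.

Hypothesis Hd0 : depth_le A0 n.
Hypothesis Hd1 : depth_le A1 n.
Hypothesis Hno : ~ (exists f, infinite_tower (lang A0) (lang A1) f).

Lemma chain_trans (ws : seq (seq Sigma)) :
  (forall i, i.+1 < size ws -> subseq (nth [::] ws i) (nth [::] ws i.+1)) ->
  forall i j, i <= j -> j < size ws -> subseq (nth [::] ws i) (nth [::] ws j).
Proof.
move=> Hc i; elim=> [|j IH] Hij Hj.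
  by move: Hij; rewrite leqn0 => /eqP ->; apply: subseq_refl.
case: (ltngtP i j.+1) Hij => // [Hlt | ->] _; last by apply: subseq_refl.
by apply: subseq_trans (IH Hlt (ltnW Hj)) (Hc _ Hj).
Qed.

Lemma main N : forall F (ws : seq (seq Sigma)), pot n F < N ->
  (forall i, i < size ws -> inI F (nth [::] ws i)) ->
  (forall i, i.+1 < size ws -> subseq (nth [::] ws i) (nth [::] ws i.+1)) ->
  (forall i, i < size ws -> lang (Ab (odd i.+1)) (nth [::] ws i)) ->
  size ws <= (pot n F).+1.
Proof.
elim: N => [|N IH] F ws // HN HI Hc Hl.
case E: (size ws) => [|[|r]] //.
have Hd : forall p, depth_le (Ab p) n by case.
have Hpre : forall t G, t < size ws -> pot n G < pot n F -> inI G (nth [::] ws t) ->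
    t.+1 <= (pot n G).+1.
  move=> t G Ht HG HIG.
  have Hsz : size (take t.+1 ws) = t.+1 by rewrite size_takel.
  rewrite -Hsz; apply: IH.
  - by lia.
  - move=> i; rewrite Hsz => Hi; rewrite nth_take //.
    by apply: inI_down HIG _; apply: chain_trans => //; lia.
  - move=> i; rewrite Hsz => Hi; rewrite !nth_take //; [apply: Hc; lia | lia].
  - move=> i; rewrite Hsz => Hi; rewrite nth_take //; apply: Hl; lia.
have Hcase : forall t, t < size ws ->
    (exists G, pot n G < pot n F /\ inI G (nth [::] ws t)) \/ fullL (Ab (odd t.+1)) F.
  move=> t Ht.
  have [G [HG Hp He]] := K_lang (Hd _) (Hl t Ht) (HI t Ht).
  case: (ltngtP (pot n G) (pot n F)) Hp => // [Hlt | Heq] _.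
    by left; exists G.
  by right; apply: He.
have Hr1 : r < size ws by rewrite E.
have Hr2 : r.+1 < size ws by rewrite E.
case: (Hcase r Hr1) => [[G [HG HIG]] | F1].
  have := Hpre r G Hr1 HG HIG; lia.
case: (Hcase r.+1 Hr2) => [[G [HG HIG]] | F2].
  have := Hpre r.+1 G Hr2 HG HIG; lia.
exfalso; apply: Hno; move: F1 F2; rewrite /Ab /=; case: (odd r) => /= F1 F2.
  exact: inf_tower F1 F2.
exact: inf_tower F2 F1.
Qed.
End Main.
Theorem theorem7 (Sigma : finType) (m n : nat) (A0 A1 : nfa Sigma) :
  #|Sigma| = m ->
  no_useless_states A0 -> no_useless_states A1 ->
  depth_le A0 n -> depth_le A1 n ->
  ~ (exists f : nat -> seq Sigma,
       infinite_tower (lang A0) (lang A1) f) ->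
  forall ws : seq (seq Sigma),
    tower (lang A0) (lang A1) ws ->
    (forall i, 0 < i <= size ws ->
       nth [::] ws i.-1 \in (if odd i then lang A1 else lang A0)) ->
    size ws <= \sum_(k < m.+1) n ^ k.
Proof.
move=> Hm _ _ Hd0 Hd1 Hno ws [_ Htw] Halt.
have := @main Sigma n A0 A1 Hd0 Hd1 Hno (pot n [:: Star [set: Sigma]]).+1 [:: Star [set: Sigma]] ws (ltnSn _).
rewrite /pot /= addn0 cardsT Hm -T_sum add1n; apply.
- by move=> i _; apply: inI_top.
- by move=> i Hi; have [] := Htw i Hi.
- move=> i Hi; have := Halt i.+1; rewrite /= Hi => /(_ isT).
  by rewrite /Ab; case: (odd i).
Qed.
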